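(* Let $C$ be a ternary linear $[n,k,d]$ code with $\dim(C\cap C^{\perp_E})=s$. For any $i\in\{1,\ldots,n\}$, if $C_i$ denotes the shortened code of $C$ on the $i$-th coordinate, then $\dim(C_i\cap C_i^{\perp_E})\le s+1$.
   Context: A ternary $[n,k,d]$ code is a $k$-dimensional subspace of $\mathbb{F}_3^n$ with minimum nonzero Hamming weight $d$. $C^{\perp_E}$ is the dual with respect to $\langle x,y\rangle_E=\sum x_iy_i$. The shortened code $C_i$ is obtained by taking the codewords of $C$ whose $i$-th coordinate is $0$ and deleting that coordinate. *)

(* Defs.v *)
From mathcomp Require Import all_boot all_algebra.
Set Implicit Arguments. Unset Strict Implicit. Unset Printing Implicit Defensive.
Import GRing.Theory.
Local Open Scope ring_scope.

(* A linear code of length n over a field F is represented (mxalgebra style)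
   as the row space of a matrix C : 'M[F]_(m, n); its dimension is \rank C. *)

Definition edual {F : fieldType} (m n : nat) (C : 'M[F]_(m, n)) : 'M[F]_n :=
  kermx C^T.

Definition zero_coord {F : fieldType} (n : nat) (i : 'I_n) : 'M[F]_n :=
  kermx (delta_mx i 0 : 'M[F]_(n, 1)).

Definition del_coord_mx {F : fieldType} (n : nat) (i : 'I_n.+1) : 'M[F]_(n.+1, n) :=
  \matrix_(k, j) (k == lift i j)%:R.

Definition shortened {F : fieldType} (m n : nat) (C : 'M[F]_(m, n.+1))
  (i : 'I_n.+1) : 'M[F]_(n.+1, n) :=
  ((C :&: zero_coord i)%MS *m del_coord_mx i).

(* Main.v *)
Require Import Defs.
From mathcomp Require Import all_boot all_algebra.
From mathcomp Require Import zify.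
Set Implicit Arguments. Unset Strict Implicit. Unset Printing Implicit Defensive.
Import GRing.Theory.
Local Open Scope ring_scope.

Section S.
Variable F : fieldType.

Lemma PPt (n : nat) (i : 'I_n.+1) :
  del_coord_mx (F:=F) i *m (del_coord_mx i)^T = 1%:M - delta_mx i i.
Proof.
apply/matrixP => k b; rewrite !mxE.
under eq_bigr do rewrite /del_coord_mx !mxE.
case: (unliftP i k) => [j0 ->|->].
- rewrite (bigD1 j0) //= big1 => [|j /negbTE Hj]; last first.
    by rewrite (inj_eq lift_inj) eq_sym Hj mul0r.
  rewrite eqxx mul1r addr0.
  have Hn : (lift i j0 == i) = false by rewrite eq_sym (negbTE (neq_lift _ _)).
  by rewrite Hn subr0 eq_sym.
- rewrite big1 => [|j _]; last by rewrite (negbTE (neq_lift i j)) mul0r.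
  by rewrite eqxx /= eq_sym subrr.
Qed.

Lemma edual_mem m n (D : 'M[F]_(m, n)) p (x : 'M[F]_(p, n)) :
  (x <= edual D)%MS = (x *m D^T == 0).
Proof. by rewrite /edual sub_kermx. Qed.

Lemma rank_edual m n (D : 'M[F]_(m, n)) : \rank (edual D) = (n - \rank D)%N.
Proof. by rewrite /edual mxrank_ker mxrank_tr. Qed.

Lemma edualS m1 m2 n (D : 'M[F]_(m1, n)) (C : 'M[F]_(m2, n)) :
  (D <= C)%MS -> (edual C <= edual D)%MS.
Proof.
move=> /submxP [y ->]; rewrite edual_mem trmx_mul mulmxA.
by move: (submx_refl (edual C)); rewrite edual_mem => /eqP ->; rewrite mul0mx.
Qed.

Lemma hull_sub m n (C : 'M[F]_(m, n)) m2 (D : 'M[F]_(m2, n)) :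
  (D <= C)%MS -> (\rank C <= (\rank D).+1)%N ->
  (\rank (D :&: edual D) <= (\rank (C :&: edual C)).+1)%N.
Proof.
move=> DC rk.
set H := (D :&: edual D)%MS.
have := mxrank_sum_cap H (edual C).
have h1 : (H :&: edual C <= C :&: edual C)%MS.
  rewrite sub_capmx capmxSr andbT.
  exact: submx_trans (capmxSl _ _) (submx_trans (capmxSl _ _) DC).
have h2 : (H + edual C <= edual D)%MS.
  by rewrite addsmx_sub capmxSr edualS.
move/mxrankS: h1; move/mxrankS: h2.
rewrite !rank_edual.
have := rank_leq_col C; have := rank_leq_col D.
lia.
Qed.

Lemma short_hull n m (D : 'M[F]_(m, n.+1)) (i : 'I_n.+1) :
  (D *m delta_mx i (0 : 'I_1) == 0) ->
  (\rank ((D *m del_coord_mx i) :&: edual (D *m del_coord_mx i)) <=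
   \rank (D :&: edual D))%N.
Proof.
move=> /eqP D0.
set P := del_coord_mx i.
have DPP : D *m P *m P^T = D.
  rewrite -mulmxA PPt mulmxBr mulmx1 -(mul_delta_mx (0 : 'I_1)) mulmxA D0.
  by rewrite mul0mx subr0.
apply: leq_trans (mxrankM_maxl _ P); apply: mxrankS.
apply/rV_subP => w.
rewrite sub_capmx => /andP [/submxP [y ->]].
rewrite edual_mem mulmxA => /eqP H0.
apply: submxMr.
rewrite sub_capmx submxMl edual_mem.
rewrite -{1}DPP !mulmxA -(mulmxA _ P^T) -trmx_mul H0; apply/andP; split=> //.
Qed.

End S.

Theorem proposition5p3 (n m : nat) (C : 'M['F_3]_(m, n.+1)) (s : nat) :
  \rank (C :&: edual C)%MS = s ->
  forall i : 'I_n.+1,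
    (\rank (shortened C i :&: edual (shortened C i))%MS <= s.+1)%N.
Proof.
move=> Hs i; rewrite -Hs /shortened.
set D := (C :&: zero_coord i)%MS.
apply: (leq_trans (short_hull (D:=D) _)).
  by rewrite -sub_kermx capmxSr.
apply: hull_sub; first exact: capmxSl.
have := mxrank_sum_cap C (zero_coord (F:='F_3) i).
rewrite /zero_coord mxrank_ker mxrank_delta.
have := rank_leq_col (C + kermx (delta_mx i (0:'I_1) : 'M['F_3]_(n.+1,1)))%MS.
rewrite -/(zero_coord i) -/D.
lia.
Qed.
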